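(* Let $\mathcal{A}=\mathcal{A}_1\cup\mathcal{A}_2\cup\mathcal{A}_3$ be an arrangement of $9$ lines in $\mathbb{P}^2\mathbb{C}$ defined by a $(3,3)$-net. Then every intersection point of $\mathcal{A}$ is a double or a triple point. The $9$ mixed triple points are always triple points. Moreover, the number of non-mixed triple points (each lying inside a single class $\mathcal{A}_i$) is $0$, $1$ or $3$; in particular, no such net has exactly $11$ triple points. More precisely, exactly one of the following holds. (1) $\mathcal{A}$ has no double points and $12$ triple points: the $9$ mixed ones and one triple point inside each $\mathcal{A}_i$. In this case $\mathcal{A}$ is lattice isomorphic to the Ceva arrangement $(x^3-y^3)(y^3-z^3)(z^3-x^3)=0$. (2) $\mathcal{A}$ has $9$ double points, and its only triple points are the $9$ mixed triple points. In this case $\mathcal{A}$ is lattice isomorphic to the Hesse-type arrangement obtained as the union of three of the four singular fibers of the Hesse pencil $a(x^3+y^3+z^3)+b\,xyz$; each singular fiber is a union of three lines. (3) $\mathcal{A}$ has $6$ double points and $10$ triple points: the $9$ mixed ones and one triple point inside exactly one of the $\mathcal{A}_i$. In this case $\mathcal{A}$ is lattice isomorphic to the arrangement with lines $L_1=(y)$, $L_2=(\tfrac1b x+y+z)$, $L_3=(\tfrac{b}{b-1}x+z)$, $L_4=(x)$, $L_5=(x+by+z)$, $L_6=(by+z)$, $L_7=(x+b(1-b)y)$, $L_8=(x+y+z)$, $L_9=(z)$, for some $b\in\mathbb{C}\setminus\{0,1\}$ with $b^3\neq -1$. All three cases occur.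
   Context: A $(3,q)$-net in $\mathbb{P}^2\mathbb{C}$ is a line arrangement $\mathcal{A}$ together with a partition $\mathcal{A}=\mathcal{A}_1\sqcup\mathcal{A}_2\sqcup\mathcal{A}_3$ with $|\mathcal{A}_i|=q$ for each $i$, such that every intersection point of two lines from different classes lies on exactly one line of each class. Equivalently, $\mathcal{A}$ is defined by $Q_1Q_2Q_3=0$ where $Q_1,Q_2$ span a pencil of degree-$q$ curves and $Q_3=Q_1+Q_2$, each $Q_i$ being a product of $q$ distinct linear forms. A mixed triple point is a point lying on one line from each of $\mathcal{A}_1,\mathcal{A}_2,\mathcal{A}_3$; there are exactly $q^2$ of them, namely the base points $Q_1=Q_2=0$. A point of multiplicity $k$ (double, triple, quadruple, quintuple point) is a point lying on exactly $k$ lines of the arrangement. Two line arrangements are lattice isomorphic if there is a bijection between their sets of lines under which a set of lines is concurrent in one arrangement exactly when the corresponding set is concurrent in the other, i.e. the intersection lattices are isomorphic. *)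

(* Defs.v *)
From HB Require Import structures.
From mathcomp Require Import all_boot all_order all_algebra.
From Stdlib Require Import ClassicalEpsilon.
Set Implicit Arguments. Unset Strict Implicit. Unset Printing Implicit Defensive.
Import Order.TTheory GRing.Theory Num.Theory.
Local Open Scope ring_scope.

Definition pb (P : Prop) : bool :=
  if excluded_middle_informative P then true else false.

Section Arr.
Variable C : numClosedFieldType.

(* Homogeneous coordinates: points and lines of P^2 are nonzero row vectors
   of length 3, taken up to scalar. *)
Definition vec3 (a b c : C) : 'rV[C]_3 := \row_(k < 3) nth 0 [:: a; b; c] k.

Definition on_line (p l : 'rV[C]_3) : bool := \sum_(k < 3) p 0 k * l 0 k == 0.

(* Lines are indexed by (class i, position j); class i is A_{i+1}. *)
Definition lineIdx := ('I_3 * 'I_3)%type.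
Definition class (i : 'I_3) : {set lineIdx} := [set l : lineIdx | l.1 == i].

Definition is_arrangement (L : lineIdx -> 'rV[C]_3) : Prop :=
  (forall l, L l != 0) /\
  (forall l1 l2, l1 != l2 -> ~ exists c : C, L l1 = c *: L l2).

Definition is_33_net (L : lineIdx -> 'rV[C]_3) : Prop :=
  is_arrangement L /\
  forall (p : 'rV[C]_3) (i j a b : 'I_3), p != 0 -> i != j ->
    on_line p (L (i, a)) -> on_line p (L (j, b)) ->
    forall k : 'I_3, #|[set m : 'I_3 | on_line p (L (k, m))]| = 1%N.

Definition through (L : lineIdx -> 'rV[C]_3) (p : 'rV[C]_3) : {set lineIdx} :=
  [set l | on_line p (L l)].

(* Projective points of multiplicity k >= 2 are in bijection with the sets
   of lines through them; pts L k is the set of points of multiplicity k. *)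
Definition pts (L : lineIdx -> 'rV[C]_3) (k : nat) : {set {set lineIdx}} :=
  [set S : {set lineIdx} |
     pb (exists p, p != 0 /\ through L p = S) && (#|S| == k)].

Definition n_inner_triple (L : lineIdx -> 'rV[C]_3) (i : 'I_3) : nat :=
  #|[set S in pts L 3 | S \subset class i]|.

Definition n_nonmixed_triple (L : lineIdx -> 'rV[C]_3) : nat :=
  #|[set S in pts L 3 | [exists i, S \subset class i]]|.

Definition concurrent (L : lineIdx -> 'rV[C]_3) (S : {set lineIdx}) : Prop :=
  exists p, p != 0 /\ forall l, l \in S -> on_line p (L l).

Definition lattice_iso (L M : lineIdx -> 'rV[C]_3) : Prop :=
  exists f : lineIdx -> lineIdx, bijective f /\
    forall S : {set lineIdx}, concurrent L S <-> concurrent M (f @: S).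

(* Ceva arrangement (x^3-y^3)(y^3-z^3)(z^3-x^3), w a primitive cube root of 1:
   lines x - w^j y, y - w^j z, z - w^j x. *)
Definition ceva (w : C) (l : lineIdx) : 'rV[C]_3 :=
  match (l.1 : nat) with
  | 0%N => vec3 1 (- w ^+ l.2) 0
  | 1%N => vec3 0 1 (- w ^+ l.2)
  | _ => vec3 (- w ^+ l.2) 0 1
  end.

(* The four singular fibres of the Hesse pencil a(x^3+y^3+z^3)+b xyz:
   fibre 3 is xyz = 0 (lines x, y, z); fibre f < 3 is
   x^3+y^3+z^3 - 3 w^f xyz = 0, the product of x + w^(j+f) y + w^(2j) z. *)
Definition hesse_line (w : C) (f : 'I_4) (j : 'I_3) : 'rV[C]_3 :=
  if (f : nat) == 3%N then \row_(k < 3) (k == j)%:R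
  else vec3 1 (w ^+ (j + f)) (w ^+ (2 * j)).

Definition hesse (w : C) (om : 'I_4) (l : lineIdx) : 'rV[C]_3 :=
  hesse_line w (lift om l.1) l.2.

Definition case3_arr (b : C) (l : lineIdx) : 'rV[C]_3 :=
  nth 0 [:: vec3 0 1 0; vec3 b^-1 1 1; vec3 (b / (b - 1)) 0 1;
            vec3 1 0 0; vec3 1 b 1; vec3 0 b 1;
            vec3 1 (b * (1 - b)) 0; vec3 1 1 1; vec3 0 0 1]
    (3 * l.1 + l.2)%N.

Definition case1 (L : lineIdx -> 'rV[C]_3) : Prop :=
  #|pts L 2| = 0%N /\ #|pts L 3| = 12%N /\
  (forall i, n_inner_triple L i = 1%N) /\
  exists w : C, w ^+ 2 + w + 1 = 0 /\ lattice_iso L (ceva w).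

Definition case2 (L : lineIdx -> 'rV[C]_3) : Prop :=
  #|pts L 2| = 9%N /\ #|pts L 3| = 9%N /\ n_nonmixed_triple L = 0%N /\
  exists (w : C) (om : 'I_4), w ^+ 2 + w + 1 = 0 /\ lattice_iso L (hesse w om).

Definition case3 (L : lineIdx -> 'rV[C]_3) : Prop :=
  #|pts L 2| = 6%N /\ #|pts L 3| = 10%N /\
  (exists i, n_inner_triple L i = 1%N /\
     forall i', i' != i -> n_inner_triple L i' = 0%N) /\
  exists b : C, b != 0 /\ b != 1 /\ b ^+ 3 != -1 /\ lattice_iso L (case3_arr b).

End Arr.

(* Main.v *)
Require Import Defs.
From HB Require Import structures.
From mathcomp Require Import all_boot all_order all_algebra.
From mathcomp Require Import ring zify.
From Stdlib Require Import ClassicalEpsilon.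
Set Implicit Arguments. Unset Strict Implicit. Unset Printing Implicit Defensive.
Import Order.TTheory GRing.Theory Num.Theory.
Local Open Scope ring_scope.

Section LA.
Variable C : numClosedFieldType.
Implicit Types p q u v l : 'rV[C]_3.

Lemma vec3E (a b c : C) : vec3 a b c 0 0 = a /\ vec3 a b c 0 1 = b /\ vec3 a b c 0 2 = c.
Proof. by rewrite /vec3 !mxE. Qed.

Lemma vec3_eta u : u = vec3 (u 0 0) (u 0 1) (u 0 2).
Proof.
apply/rowP => k; rewrite /vec3 mxE.
case: k => [[|[|[|//]]] Hk] /=; congr (u _ _); exact/val_inj.
Qed.

Definition dot u v := u 0 0 * v 0 0 + u 0 1 * v 0 1 + u 0 2 * v 0 2.

Lemma on_lineE p l : on_line p l = (dot p l == 0).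
Proof.
rewrite /on_line /dot !big_ord_recr big_ord0 /= add0r.
by congr (_ + _ + _ == _); congr (_ * _); congr (_ _ _); apply/val_inj.
Qed.


Lemma vec3_0 (a b c : C) : vec3 a b c 0 0 = a. Proof. by rewrite /vec3 !mxE. Qed.
Lemma vec3_1 (a b c : C) : vec3 a b c 0 1 = b. Proof. by rewrite /vec3 !mxE. Qed.
Lemma vec3_2 (a b c : C) : vec3 a b c 0 2 = c. Proof. by rewrite /vec3 !mxE. Qed.
Definition vec3E' := (vec3_0, vec3_1, vec3_2).

Lemma vec3_inj (a b c a' b' c' : C) :
  vec3 a b c = vec3 a' b' c' -> [/\ a = a', b = b' & c = c'].
Proof.
move=> E; split.
- by move: (congr1 (fun w : 'rV[C]_3 => w 0 0) E); rewrite !vec3E'.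
- by move: (congr1 (fun w : 'rV[C]_3 => w 0 1) E); rewrite !vec3E'.
- by move: (congr1 (fun w : 'rV[C]_3 => w 0 2) E); rewrite !vec3E'.
Qed.

Lemma vec3_ext u v : u 0 0 = v 0 0 -> u 0 1 = v 0 1 -> u 0 2 = v 0 2 -> u = v.
Proof. by move=> h0 h1 h2; rewrite (vec3_eta u) (vec3_eta v) h0 h1 h2. Qed.




Lemma scaleE (c : C) u k : (c *: u) 0 k = c * u 0 k. Proof. by rewrite mxE. Qed.
Lemma addE u v k : (u + v) 0 k = u 0 k + v 0 k. Proof. by rewrite mxE. Qed.
Lemma oppE u k : (- u) 0 k = - u 0 k. Proof. by rewrite mxE. Qed.
Lemma zeroE k : (0 : 'rV[C]_3) 0 k = 0. Proof. by rewrite mxE. Qed.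
Lemma vec3_zero : vec3 (0:C) 0 0 = 0.
Proof. by apply: vec3_ext; rewrite !vec3E' zeroE. Qed.

Lemma neq0_comp u : u != 0 -> [\/ u 0 0 != 0, u 0 1 != 0 | u 0 2 != 0].
Proof.
move=> H; apply/or3P; apply: contraR H; rewrite !negb_or !negbK => /and3P[/eqP a /eqP b /eqP c].
by apply/eqP; rewrite (vec3_eta u) a b c vec3_zero.
Qed.


Definition cross u v := vec3 (u 0 1 * v 0 2 - u 0 2 * v 0 1)
  (u 0 2 * v 0 0 - u 0 0 * v 0 2) (u 0 0 * v 0 1 - u 0 1 * v 0 0).

Lemma dotC u v : dot u v = dot v u.
Proof. by rewrite /dot; ring. Qed.

Lemma dot_cross_l u v : dot (cross u v) u = 0.
Proof. by rewrite /dot /cross !vec3E'; ring. Qed.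
Lemma dot_cross_r u v : dot (cross u v) v = 0.
Proof. by rewrite /dot /cross !vec3E'; ring. Qed.

Lemma crossC u v : cross v u = - cross u v.
Proof. by apply: vec3_ext; rewrite /cross !oppE !vec3E'; ring. Qed.

Lemma dotZl (c : C) u v : dot (c *: u) v = c * dot u v.
Proof. by rewrite /dot !scaleE; ring. Qed.
Lemma dotZr (c : C) u v : dot u (c *: v) = c * dot u v.
Proof. by rewrite /dot !scaleE; ring. Qed.
Lemma dotDr u v w : dot u (v + w) = dot u v + dot u w.
Proof. by rewrite /dot !addE; ring. Qed.
Lemma dotDl u v w : dot (v + w) u = dot v u + dot w u.
Proof. by rewrite /dot !addE; ring. Qed.

Lemma divE (a b c : C) : c != 0 -> a * c = b -> a = b / c.
Proof. by move=> Hc H; apply: (canRL (mulfK Hc)). Qed.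

Lemma cross_eq0 u v : u != 0 -> cross u v = 0 -> exists c, v = c *: u.
Proof.
move=> /neq0_comp Hu /eqP; rewrite -vec3_zero /cross => /eqP/vec3_inj[/eqP h0 /eqP h1 /eqP h2].
rewrite !subr_eq0 in h0 h1 h2; move/eqP: h0 => h0; move/eqP: h1 => h1; move/eqP: h2 => h2.
case: Hu => Hk.
- exists (v 0 0 / u 0 0); apply: vec3_ext; rewrite !scaleE.
  + by rewrite divfK.
  + by rewrite mulrAC; apply: divE => //; rewrite mulrC h2 mulrC.
  + by rewrite mulrAC; apply: divE => //; rewrite mulrC -h1 mulrC.
- exists (v 0 1 / u 0 1); apply: vec3_ext; rewrite !scaleE.
  + by rewrite mulrAC; apply: divE => //; rewrite mulrC -h2 mulrC.
  + by rewrite divfK.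
  + by rewrite mulrAC; apply: divE => //; rewrite mulrC h0 mulrC.
- exists (v 0 2 / u 0 2); apply: vec3_ext; rewrite !scaleE.
  + by rewrite mulrAC; apply: divE => //; rewrite mulrC h1 mulrC.
  + by rewrite mulrAC; apply: divE => //; rewrite mulrC -h0 mulrC.
  + by rewrite divfK.
Qed.

Lemma cross_perp u v p : dot u p = 0 -> dot v p = 0 -> cross u v != 0 ->
  exists c, p = c *: cross u v.
Proof.
move=> hu hv Hn; apply: cross_eq0 => //.
have E : cross (cross u v) p = (dot u p) *: v - (dot v p) *: u.
  by apply: vec3_ext; rewrite /cross /dot !(addE, oppE, scaleE) !vec3E'; ring.
by rewrite E hu hv !scale0r subr0.
Qed.

Lemma cross_neq0 u v : v != 0 -> ~ (exists c, u = c *: v) -> cross u v != 0.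
Proof.
move=> Hv Hn; apply/eqP => H; apply: Hn; apply: (cross_eq0 Hv).
by rewrite crossC H oppr0.
Qed.

Lemma two_pt u v p q : cross u v != 0 -> dot u p = 0 -> dot v p = 0 ->
  dot u q = 0 -> dot v q = 0 -> p != 0 -> exists c, q = c *: p.
Proof.
move=> Hn hp1 hp2 hq1 hq2 Hp.
have [c1 E1] := cross_perp hp1 hp2 Hn.
have [c2 E2] := cross_perp hq1 hq2 Hn.
have c1n : c1 != 0 by apply: contraNneq Hp => c10; rewrite E1 c10 scale0r.
by exists (c2 / c1); rewrite E2 E1 scalerA divfK.
Qed.

Lemma on_lineZ (c : C) p l : c != 0 -> on_line (c *: p) l = on_line p l.
Proof. by move=> Hc; rewrite !on_lineE dotZl mulf_eq0 (negbTE Hc). Qed.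

Lemma dot0r u : dot u 0 = 0.
Proof. by rewrite /dot !zeroE !mulr0 !addr0. Qed.
Lemma cross_self_scale (c : C) v : cross (c *: v) v = 0.
Proof. by apply: vec3_ext; rewrite /cross !vec3E' !scaleE zeroE; ring. Qed.

Lemma on_lineZr (c : C) p l : c != 0 -> on_line p (c *: l) = on_line p l.
Proof. by move=> Hc; rewrite !on_lineE dotZr mulf_eq0 (negbTE Hc). Qed.
End LA.


Section Net.
Variable C : numClosedFieldType.
Variable L : lineIdx -> 'rV[C]_3.
Hypothesis HL : is_33_net L.

Lemma L_neq0 l : L l != 0.
Proof. by case: HL => [[H _] _]. Qed.

Lemma arr_cross l1 l2 : l1 != l2 -> cross (L l1) (L l2) != 0.
Proof. by case: HL => [[H1 H2] _] Hne; apply: cross_neq0 => //; apply: H2. Qed.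

Lemma onD p l : on_line p (L l) = (dot (L l) p == 0).
Proof. by rewrite on_lineE dotC. Qed.

Lemma net_card p i j a b k : p != 0 -> i != j -> on_line p (L (i, a)) ->
  on_line p (L (j, b)) -> #|[set m | on_line p (L (k, m))]| = 1%N.
Proof. by case: HL => _ H Hp Hij Ha Hb; apply: (H p i j a b). Qed.

Lemma net_uniq p i j a b k m m' : p != 0 -> i != j -> on_line p (L (i, a)) ->
  on_line p (L (j, b)) -> on_line p (L (k, m)) -> on_line p (L (k, m')) -> m = m'.
Proof.
move=> Hp Hij Ha Hb Hm Hm'.
have /eqP/cards1P[x Ex] := net_card k Hp Hij Ha Hb.
have : m \in [set m | on_line p (L (k, m))] by rewrite inE.
have : m' \in [set m | on_line p (L (k, m))] by rewrite inE.
by rewrite Ex !inE => /eqP -> /eqP ->.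
Qed.

Lemma net_ex p i j a b k : p != 0 -> i != j -> on_line p (L (i, a)) ->
  on_line p (L (j, b)) -> exists m, on_line p (L (k, m)).
Proof.
move=> Hp Hij Ha Hb.
have /eqP/cards1P[x Ex] := net_card k Hp Hij Ha Hb.
exists x; have : x \in [set x] by rewrite inE.
by rewrite -Ex inE.
Qed.

Lemma net_not_all p i j a b k : p != 0 -> i != j -> on_line p (L (i, a)) ->
  on_line p (L (j, b)) -> ~ (forall m, on_line p (L (k, m))).
Proof.
move=> Hp Hij Ha Hb H.
by have := net_uniq Hp Hij Ha Hb (H 0) (H 1).
Qed.

Lemma prop_on x y p q : x != y -> p != 0 -> q != 0 -> on_line p (L x) ->
  on_line p (L y) -> on_line q (L x) -> on_line q (L y) ->
  forall l, on_line q (L l) = on_line p (L l).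
Proof.
move=> Hxy Hp Hq; rewrite !onD => /eqP h1 /eqP h2 /eqP h3 /eqP h4 l.
have [c Ec] := two_pt (arr_cross Hxy) h1 h2 h3 h4 Hp.
have cn : c != 0 by apply: contraNneq Hq => c0; rewrite Ec c0 scale0r.
by rewrite !onD Ec dotZr mulf_eq0 (negbTE cn).
Qed.

Lemma conc_third i j k : i != j -> i != k -> j != k ->
  concurrent L (class i) -> concurrent L (class j) -> concurrent L (class k).
Proof.
move=> Hij Hik Hjk [P [HP HPi]] [Q [HQ HQj]].
have Pi a : dot (L (i, a)) P = 0 by apply/eqP; rewrite -onD; apply: HPi; rewrite inE.
have Qj b : dot (L (j, b)) Q = 0 by apply/eqP; rewrite -onD; apply: HQj; rewrite inE.
have Qi a : dot (L (i, a)) Q != 0.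
  apply/eqP => h; apply: (net_not_all (k:=j) HQ Hij (a:=a) (b:=0)).
  - by rewrite onD h.
  - by rewrite onD Qj.
  - by move=> m; rewrite onD Qj.
have Pj b : dot (L (j, b)) P != 0.
  apply/eqP => h; apply: (net_not_all (k:=i) HP Hij (a:=0) (b:=b)).
  - by rewrite onD Pi.
  - by rewrite onD h.
  - by move=> m; rewrite onD Pi.
have HQP : cross Q P != 0.
  apply/negP => /eqP H0; have [c Ec] := cross_eq0 HQ H0.
  apply: (net_not_all (k:=i) HP Hij (a:=0) (b:=0)).
  - by rewrite onD Pi.
  - by rewrite onD Ec dotZr Qj mulr0.
  - by move=> m; rewrite onD Pi.
have [R HR] : exists R, dot (cross Q P) R != 0.
  case: (neq0_comp HQP) => h; [exists (vec3 1 0 0)|exists (vec3 0 1 0)|exists (vec3 0 0 1)];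
  by move: h; rewrite /dot /cross !vec3E' !mulr1 !mulr0 ?addr0 ?add0r.
pose al a := - dot (L (i, a)) R / dot (L (i, a)) Q.
pose be b := - dot (L (j, b)) R / dot (L (j, b)) P.
pose pt a b := al a *: Q + be b *: P + R.
have pti a b : on_line (pt a b) (L (i, a)).
  by rewrite onD /pt !dotDr !dotZr Pi mulr0 addr0 /al divfK ?Qi // addNr.
have ptj a b : on_line (pt a b) (L (j, b)).
  by rewrite onD /pt !dotDr !dotZr Qj mulr0 add0r /be divfK ?Pj // addNr.
have ptD a b : dot (cross Q P) (pt a b) = dot (cross Q P) R.
  by rewrite /pt !dotDr !dotZr dot_cross_l dot_cross_r !mulr0 !add0r.
have pt0 a b : pt a b != 0.
  by apply: contraNneq HR => E; rewrite -(ptD a b) E dot0r.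
pose S0 := (\sum_a al a) *: Q + (\sum_b be b) *: P + 3%:R *: R.
have S0n : S0 != 0.
  apply: contraNneq HR => E.
  have : dot (cross Q P) S0 = 3%:R * dot (cross Q P) R.
    by rewrite /S0 !dotDr !dotZr dot_cross_l dot_cross_r !mulr0 !add0r.
  by rewrite E dot0r => /esym/eqP; rewrite mulf_eq0 pnatr_eq0 /= => /eqP ->.
have key c : dot (L (k, c)) S0 = 0.
  have ex a : exists b, on_line (pt a b) (L (k, c)).
    pose tau b := odflt 0 [pick c' | on_line (pt a b) (L (k, c'))].
    have tauP b : on_line (pt a b) (L (k, tau b)).
      rewrite /tau; case: pickP => [x Hx //| H0] /=.
      have [m Hm] := net_ex k (pt0 a b) Hij (pti a b) (ptj a b).
      by rewrite H0 in Hm.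
    have tinj : injective tau.
      move=> b b' Eb.
      have Hx : (i, a) != (k, tau b) by rewrite xpair_eqE (negbTE Hik).
      have tb : on_line (pt a b') (L (k, tau b)) by rewrite Eb tauP.
      have E2 := prop_on Hx (pt0 a b) (pt0 a b') (pti a b) (tauP b) (pti a b') tb.
      apply: (net_uniq (k:=j) (pt0 a b) Hij (pti a b) (ptj a b) (ptj a b)).
      by rewrite -E2 ptj.
    case: (injF_bij tinj) => g gK1 gK2.
    by exists (g c); have := tauP (g c); rewrite gK2.
  pose sg a := odflt 0 [pick b | on_line (pt a b) (L (k, c))].
  have sgP a : on_line (pt a (sg a)) (L (k, c)).
    rewrite /sg; case: pickP => [x Hx //| H0] /=.
    by have [m Hm] := ex a; rewrite H0 in Hm.
  have sginj : injective sg.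
    move=> a a' Ea.
    have Hx : (j, sg a) != (k, c) by rewrite xpair_eqE (negbTE Hjk).
    have ta : on_line (pt a' (sg a')) (L (j, sg a)) by rewrite Ea ptj.
    have E2 := prop_on Hx (pt0 a (sg a)) (pt0 a' (sg a')) (ptj a (sg a)) (sgP a)
       ta (sgP a').
    apply: (net_uniq (k:=i) (pt0 a (sg a)) Hij (pti a (sg a)) (ptj a (sg a)) (pti a _)).
    by rewrite -E2 pti.
  have Ek : dot (L (k, c)) S0 = \sum_a dot (L (k, c)) (pt a (sg a)).
    rewrite /S0 /pt /= !dotDr !dotZr.
    rewrite [RHS](eq_bigr (fun a => al a * dot (L (k, c)) Q + be (sg a) * dot (L (k, c)) P
       + dot (L (k, c)) R)); last by move=> a _; rewrite !dotDr !dotZr.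
    move: (dot (L (k, c)) Q) (dot (L (k, c)) P) (dot (L (k, c)) R) => x y z.
    rewrite !big_split /= -!mulr_suml sumr_const card_ord mulr_natl.
    by congr (_ + _ * _ + _); exact: (reindex_inj sginj).
  by rewrite Ek big1 // => a _; apply/eqP; rewrite -onD.
exists S0; split => // -[k' c]; rewrite inE /= => /eqP ->.
by rewrite onD key.
Qed.

End Net.


Lemma lat3 (x y z : 'I_3) : x != 0 -> y != 0 -> z != 0 -> x + y + z = 0 -> x = y.
Proof.
case: x => [[|[|[|//]]] hx]; case: y => [[|[|[|//]]] hy]; case: z => [[|[|[|//]]] hz];
  move=> ex ey ez /(congr1 val) e; apply/val_inj; move: ex ey ez e; rewrite /=; done.
Qed.
Lemma sum3 (V : zmodType) (F : 'I_3 -> V) : \sum_i F i = F 0 + F 1 + F 2.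
Proof.
rewrite !big_ord_recr big_ord0 /= add0r.
by congr (_ + _ + _); congr F; apply/val_inj.
Qed.

Lemma ord3 (b : 'I_3) : [\/ b = 0, b = 1 | b = 2].
Proof.
by case: b => [[|[|[|//]]] Hb]; [apply: Or31|apply: Or32|apply: Or33]; apply/val_inj.
Qed.

Lemma latin_affine (T : 'I_3 -> 'I_3 -> 'I_3) :
  (forall a, injective (T a)) -> (forall b, injective (T^~ b)) ->
  forall a b, T a b = T a 0 + T 0 b - T 0 0.
Proof.
move=> Hr Hc a b.
case: (eqVneq a 0) => [-> | Ha]; first by rewrite addrAC subrr add0r.
pose d x := T a x - T 0 x.
have dn x : d x != 0.
  by rewrite /d subr_eq0; apply: contra_neq Ha => /Hc.
have Sa c : \sum_x T c x = \sum_x x by symmetry; exact: (reindex_inj (Hr c)).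
have ds : d 0 + d 1 + d 2 = 0.
  by rewrite -sum3 /d sumrB Sa Sa subrr.
have d01 : d 0 = d 1 := lat3 (dn 0) (dn 1) (dn 2) ds.
have d12 : d 1 = d 2.
  by apply: (lat3 (dn 1) (dn 2) (dn 0)); rewrite addrC addrA.
have db : d b = d 0 by case: (ord3 b) => ->; rewrite ?d01 ?d12.
have : T a b = d b + T 0 b by rewrite /d subrK.
by rewrite db /d => ->; rewrite addrAC.
Qed.

Lemma pbP (P : Prop) : reflect P (pb P).
Proof. by rewrite /pb; case: excluded_middle_informative => h; constructor. Qed.

Lemma tri_set_inj (T1 T2 : 'I_3 -> 'I_3 -> 'I_3) a b a' b' :
  [set ((0 : 'I_3), a); (1, b); (2, T1 a b)] = [set (0, a'); (1, b'); (2, T2 a' b')] ->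
  a = a' /\ b = b'.
Proof.
move=> E.
have h0 : ((0 : 'I_3), a) \in [set (0, a'); (1, b'); (2, T2 a' b')] by rewrite -E !inE eqxx.
have h1 : ((1 : 'I_3), b) \in [set (0, a'); (1, b'); (2, T2 a' b')] by rewrite -E !inE eqxx orbT.
by rewrite !inE !xpair_eqE /= ?orbF in h0 h1; move/eqP: h0 => ->; move/eqP: h1 => ->.
Qed.

Lemma class_inj : injective class.
Proof. move=> i j E; have : (i, 0) \in class j by rewrite -E inE. by rewrite inE => /eqP. Qed.

Lemma tri_neq_class (T1 : 'I_3 -> 'I_3 -> 'I_3) a b i :
  [set ((0 : 'I_3), a); (1, b); (2, T1 a b)] != class i.
Proof.
apply/eqP => E.
have h0 : ((0 : 'I_3), a) \in class i by rewrite -E !inE eqxx.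
have h1 : ((1 : 'I_3), b) \in class i by rewrite -E !inE eqxx orbT.
by rewrite !inE /= in h0 h1; move/eqP: h0 => h0; move/eqP: h1; rewrite -h0.
Qed.

Lemma tri_not_sub (T1 : 'I_3 -> 'I_3 -> 'I_3) a b i :
  ~~ ([set ((0 : 'I_3), a); (1, b); (2, T1 a b)] \subset class i).
Proof.
apply/negP => /subsetP H.
have h0 : ((0 : 'I_3), a) \in class i by apply: H; rewrite !inE eqxx.
have h1 : ((1 : 'I_3), b) \in class i by apply: H; rewrite !inE eqxx orbT.
by rewrite !inE /= in h0 h1; move/eqP: h0 => h0; move/eqP: h1; rewrite -h0.
Qed.

Lemma class_sub i j : (class j \subset class i) = (j == i).
Proof.
apply/idP/idP => [/subsetP H|/eqP -> //].
have : (j, 0) \in class i by apply: H; rewrite inE.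
by rewrite inE.
Qed.

Section Struct.
Variable C : numClosedFieldType.
Variable L : lineIdx -> 'rV[C]_3.
Hypothesis HL : is_33_net L.

Definition mp (a b : 'I_3) := cross (L (0, a)) (L (1, b)).

Lemma mp_neq0 a b : mp a b != 0.
Proof. by apply: arr_cross. Qed.

Lemma mp_on0 a b : on_line (mp a b) (L (0, a)).
Proof. by rewrite onD dotC dot_cross_l. Qed.
Lemma mp_on1 a b : on_line (mp a b) (L (1, b)).
Proof. by rewrite onD dotC dot_cross_r. Qed.

Definition T a b : 'I_3 := odflt 0 [pick c | on_line (mp a b) (L (2, c))].

Lemma TP a b : on_line (mp a b) (L (2, T a b)).
Proof.
rewrite /T; case: pickP => [x Hx //| H0] /=.
have [m Hm] := net_ex HL 2 (mp_neq0 a b) (isT : (0 : 'I_3) != 1) (mp_on0 a b) (mp_on1 a b).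
by rewrite H0 in Hm.
Qed.

Lemma T_uniq a b c : on_line (mp a b) (L (2, c)) -> c = T a b.
Proof.
move=> H.
exact: (net_uniq HL (mp_neq0 a b) (isT : (0 : 'I_3) != 1) (mp_on0 a b) (mp_on1 a b) H (TP a b)).
Qed.

Lemma T_inj_r a : injective (T a).
Proof.
move=> b b' E.
have Hx : ((0 : 'I_3), a) != (2, T a b) by [].
have tb : on_line (mp a b') (L (2, T a b)) by rewrite E TP.
have E2 := prop_on HL Hx (mp_neq0 a b) (mp_neq0 a b') (mp_on0 a b) (TP a b) (mp_on0 a b') tb.
apply: (net_uniq HL (mp_neq0 a b) (isT : (0 : 'I_3) != 1) (mp_on0 a b) (mp_on1 a b) (mp_on1 a b)).
by rewrite -E2 mp_on1.
Qed.

Lemma T_inj_l b : injective (T ^~ b).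
Proof.
move=> a a' /= E.
have Hx : ((1 : 'I_3), b) != (2, T a b) by [].
have tb : on_line (mp a' b) (L (2, T a b)) by rewrite E TP.
have E2 := prop_on HL Hx (mp_neq0 a b) (mp_neq0 a' b) (mp_on1 a b) (TP a b) (mp_on1 a' b) tb.
apply: (net_uniq HL (mp_neq0 a b) (isT : (0 : 'I_3) != 1) (mp_on0 a b) (mp_on1 a b) (mp_on0 a b)).
by rewrite -E2 mp_on0.
Qed.

Definition tri a b : {set lineIdx} := [set (0, a); (1, b); (2, T a b)].

Lemma through_mp a b : through L (mp a b) = tri a b.
Proof.
apply/setP => -[k m]; rewrite /through /tri !inE !xpair_eqE.
case: (ord3 k) => -> /=; rewrite ?orbF ?orFb.
- apply/idP/idP => [H|/eqP ->]; last exact: mp_on0.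
  by rewrite (net_uniq HL (mp_neq0 a b) (isT : (0 : 'I_3) != 1) (mp_on0 a b) (mp_on1 a b) H (mp_on0 a b)) eqxx.
- apply/idP/idP => [H|/eqP ->]; last exact: mp_on1.
  by rewrite (net_uniq HL (mp_neq0 a b) (isT : (0 : 'I_3) != 1) (mp_on0 a b) (mp_on1 a b) H (mp_on1 a b)) eqxx.
- apply/idP/idP => [H|/eqP ->]; last exact: TP.
  by rewrite -(T_uniq H) eqxx.
Qed.

Lemma card_tri a b : #|tri a b| = 3%N.
Proof. by rewrite /tri -setUA !cardsU1 cards1 !inE !xpair_eqE. Qed.

Lemma class_card i : #|class i| = 3%N.
Proof.
have -> : class i = setX [set i] setT by apply/setP => -[k m]; rewrite !inE andbT.
by rewrite cardsX cards1 cardsT card_ord.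
Qed.

Lemma through_mixed p x y : p != 0 -> on_line p (L x) -> on_line p (L y) ->
  x.1 != y.1 -> exists a b, through L p = tri a b.
Proof.
case: x => i a0; case: y => j b0 /= Hp Hx Hy Hij.
have [a Ha] := net_ex HL 0 Hp Hij Hx Hy.
have [b Hb] := net_ex HL 1 Hp Hij Hx Hy.
have Hd : ((0 : 'I_3), a) != (1, b) by [].
have E := prop_on HL Hd (mp_neq0 a b) Hp (mp_on0 a b) (mp_on1 a b) Ha Hb.
exists a, b; rewrite -through_mp; apply/setP => l; by rewrite !inE E.
Qed.

Lemma through_class p i : p != 0 -> (forall l, l \in class i -> on_line p (L l)) ->
  through L p = class i.
Proof.
move=> Hp H; apply/setP => -[k m]; rewrite !inE /=.
apply/idP/idP => [Hl|Hk]; last by apply: H; rewrite inE.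
case: (eqVneq k i) => // Hki.
have H0 : on_line p (L (i, 0)) by apply: H; rewrite inE.
exfalso; apply: (net_not_all HL (k:=i) Hp Hki Hl H0) => m'; by apply: H; rewrite inE.
Qed.

Lemma through_dich p : p != 0 ->
  (exists a b, through L p = tri a b) \/ (exists i, through L p \subset class i).
Proof.
move=> Hp.
case: (boolP [exists x in through L p, exists y in through L p, x.1 != y.1]).
  move=> /exists_inP[x Hx /exists_inP[y Hy Hxy]]; left.
  by rewrite !inE in Hx Hy; apply: (through_mixed Hp Hx Hy Hxy).
move=> /exists_inPn Hn; right.
case: (set_0Vmem (through L p)) => [->|[x Hx]]; first by exists 0; apply: sub0set.
exists x.1; apply/subsetP => y Hy; rewrite inE.
by have /exists_inPn/(_ y Hy) := Hn x Hx; rewrite negbK eq_sym.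
Qed.

Lemma through_le3 p : p != 0 -> (#|through L p| <= 3)%N.
Proof.
move=> Hp; case: (through_dich Hp) => [[a [b ->]]|[i Hi]]; first by rewrite card_tri.
by apply: (leq_trans (subset_leq_card Hi)); rewrite class_card.
Qed.

Lemma through_23 p : p != 0 -> (2 <= #|through L p|)%N ->
  #|through L p| = 2%N \/ #|through L p| = 3%N.
Proof.
move=> Hp H2; have := through_le3 Hp.
by case: (#|through L p|) H2 => [|[|[|[|]]]] //; [left|right].
Qed.

Lemma through_all p : p != 0 -> (forall i : 'I_3, exists j, on_line p (L (i, j))) ->
  #|through L p| = 3%N.
Proof.
move=> Hp H; have [a Ha] := H 0; have [b Hb] := H 1.
have [a' [b' ->]] := through_mixed (x := (0, a)) (y := (1, b)) Hp Ha Hb isT.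
exact: card_tri.
Qed.

Definition ccb i := pb (concurrent L (class i)).
Definition CC := [set i | ccb i].

Lemma pts3_eq : pts L 3 =
  [set tri ab.1 ab.2 | ab in [set: 'I_3 * 'I_3]] :|: [set class i | i in CC].
Proof.
apply/setP => S; rewrite /pts inE in_setU; apply/idP/idP.
- case/andP => /pbP [p [Hp <-]] /eqP H3.
  case: (through_dich Hp) => [[a [b E]]|[i Hi]].
    by apply/orP; left; apply/imsetP; exists (a, b); rewrite ?inE.
  have E : through L p = class i.
    by apply/eqP; rewrite eqEcard Hi class_card H3 leqnn.
  apply/orP; right; apply/imsetP; exists i => //.
  by rewrite inE; apply/pbP; exists p; split => // l; rewrite -E inE.
- case/orP => /imsetP [x Hx ->].
    rewrite card_tri eqxx andbT; apply/pbP; exists (mp x.1 x.2).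
    by split; [exact: mp_neq0| exact: through_mp].
  rewrite class_card eqxx andbT; apply/pbP.
  rewrite inE in Hx; move/pbP: Hx => [q [Hq Hq2]].
  by exists q; split => //; exact: through_class.
Qed.

Lemma card_pts3 : #|pts L 3| = (9 + #|CC|)%N.
Proof.
have tinj : injective (fun ab : 'I_3 * 'I_3 => tri ab.1 ab.2).
  by move=> [a b] [a' b'] /= /tri_set_inj [-> ->].
rewrite pts3_eq cardsU (card_imset _ tinj) (card_imset _ class_inj) cardsT card_prod card_ord.
suff -> : [set tri ab.1 ab.2 | ab in [set: 'I_3 * 'I_3]] :&: [set class i | i in CC] = set0.
  by rewrite cards0 subn0.
apply/setP => S; rewrite !inE; apply/negP => /andP[/imsetP[x _ ->] /imsetP[i _ /eqP]].
by rewrite (negbTE (tri_neq_class _ _ _ _)).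
Qed.

Definition g2 (x : lineIdx) := class x.1 :\ x.

Lemma g2_inj : injective g2.
Proof.
move=> [i a] [j b]; rewrite /g2 /= => E.
have [c Hc] : exists c : 'I_3, c != a by exists (a + 1); rewrite -subr_eq0 addrAC subrr add0r.
have : (i, c) \in class j :\ (j, b) by rewrite -E !inE xpair_eqE eqxx /= Hc.
rewrite !inE /= => /andP[_ /eqP eij]; subst j.
case: (eqVneq a b) => [-> //|hab].
have : (i, a) \in class i :\ (i, b) by rewrite !inE xpair_eqE eqxx /= hab.
by rewrite -E !inE eqxx.
Qed.

Lemma class_pair x : exists y z, [/\ y != z, y \in class x.1, z \in class x.1
  & class x.1 :\ x = [set y; z]].
Proof.
have : #|class x.1 :\ x| == 2%N.
  by have := cardsD1 x (class x.1); rewrite class_card inE eqxx add1n => -[E]; rewrite -E.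
move/cards2P => [y [z [Hyz E]]].
have hy : y \in class x.1 :\ x by rewrite E !inE eqxx.
have hz : z \in class x.1 :\ x by rewrite E !inE eqxx orbT.
rewrite !inE in hy hz; case/andP: hy => hy1 hy2; case/andP: hz => hz1 hz2.
by exists y, z; split; rewrite ?inE.
Qed.

Lemma pts2_eq : pts L 2 = [set g2 x | x in [set x : lineIdx | ~~ ccb x.1]].
Proof.
apply/setP => S; rewrite /pts inE; apply/idP/idP.
- case/andP => /pbP [p [Hp E]] /eqP H2.
  case: (through_dich Hp) => [[a [b Et]]|[i Hi]]; first by move: H2; rewrite -E Et card_tri.
  have Hs : S \subset class i by rewrite -E.
  have : #|class i :\: S| == 1%N by rewrite cardsD (setIidPr Hs) class_card H2.
  move/cards1P => [x Ex].
  have : x \in class i :\: S by rewrite Ex inE.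
  rewrite inE => /andP[xS xi].
  have Egx : S = class i :\ x.
    apply/setP => l; rewrite !inE; apply/idP/idP => [Hl|/andP[Hlx Hli]].
      have := subsetP Hs _ Hl; rewrite inE => ->; rewrite andbT.
      by apply: contraNneq xS => <-.
    apply/negPn; apply: contra Hlx => HlS.
    have : l \in class i :\: S by rewrite !inE HlS Hli.
    by rewrite Ex inE.
  rewrite inE in xi; apply/imsetP; exists x; last by rewrite Egx /g2 (eqP xi).
  rewrite inE (eqP xi); apply/negP => /pbP [q [Hq Hcq]].
  move/eqP/cards2P: (H2) => [y [z [Hyz ES]]].
  have yS : y \in S by rewrite ES !inE eqxx.
  have zS : z \in S by rewrite ES !inE eqxx orbT.
  have Hy : on_line p (L y) by move: yS; rewrite -E inE.
  have Hz : on_line p (L z) by move: zS; rewrite -E inE.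
  have E2 := prop_on HL Hyz Hq Hp (Hcq y (subsetP Hs _ yS)) (Hcq z (subsetP Hs _ zS)) Hy Hz.
  have : class i \subset S.
    by apply/subsetP => l Hl; rewrite -E inE E2; apply: Hcq.
  by move/subset_leq_card; rewrite class_card H2.
- case/imsetP => x; rewrite inE => Hx ->.
  have [y [z [Hyz yi zi Ecl]]] := class_pair x.
  rewrite /g2 Ecl cards2 Hyz eqxx andbT.
  have Hp := arr_cross HL Hyz.
  have Hy : on_line (cross (L y) (L z)) (L y) by rewrite on_lineE dot_cross_l.
  have Hz : on_line (cross (L y) (L z)) (L z) by rewrite on_lineE dot_cross_r.
  apply/pbP; exists (cross (L y) (L z)); split => //.
  apply/setP => l; rewrite inE; apply/idP/idP; last first.
    by rewrite !inE => /orP[] /eqP ->.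
  move=> Hl; rewrite -Ecl !inE.
  have li : l \in class x.1.
    rewrite inE; apply/negPn/negP => Hli.
    move: yi zi; rewrite !inE => /eqP yi /eqP zi.
    have Hl' : on_line (cross (L y) (L z)) (L (l.1, l.2)) by rewrite -surjective_pairing.
    have Hy' : on_line (cross (L y) (L z)) (L (x.1, y.2)) by rewrite -yi -surjective_pairing.
    have Hz' : on_line (cross (L y) (L z)) (L (x.1, z.2)) by rewrite -zi -surjective_pairing.
    have E := net_uniq HL Hp Hli Hl' Hy' Hy' Hz'.
    by move: Hyz; rewrite [y]surjective_pairing [z]surjective_pairing yi zi E eqxx.
  move: (li); rewrite inE => ->; rewrite andbT; apply/negP => /eqP Elx; subst l.
  move: Hx => /negP; apply; apply/pbP.
  exists (cross (L y) (L z)); split => // l' Hl'.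
  case: (eqVneq l' x) => [-> //|Hne].
  have : l' \in class x.1 :\ x by rewrite in_setD1 Hne Hl'.
  by rewrite Ecl !inE => /orP[] /eqP ->.
Qed.

Lemma card_pts2 : #|pts L 2| = ((3 - #|CC|) * 3)%N.
Proof.
rewrite pts2_eq (card_imset _ g2_inj).
have -> : [set x : lineIdx | ~~ ccb x.1] = setX (~: CC) setT.
  by apply/setP => -[i a]; rewrite !inE andbT.
by rewrite cardsX cardsT card_ord cardsCs setCK card_ord.
Qed.

Lemma inner_eq i : n_inner_triple L i = ccb i.
Proof.
rewrite /n_inner_triple.
have -> : [set S in pts L 3 | S \subset class i] = if ccb i then [set class i] else set0.
  apply/setP => S; rewrite inE pts3_eq in_setU.
  apply/idP/idP.
  - case/andP => /orP[/imsetP[x _ ->]|/imsetP[j Hj ->]] Hsub.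
      by move: Hsub; rewrite /tri (negbTE (tri_not_sub _ _ _ _)).
    rewrite class_sub in Hsub; rewrite -(eqP Hsub); rewrite inE in Hj.
    by rewrite Hj inE.
  - case Hc : (ccb i); last by rewrite inE.
    rewrite inE => /eqP ->; rewrite subxx andbT; apply/orP; right.
    by apply/imsetP; exists i; rewrite ?inE.
by case: (ccb i); rewrite ?cards1 ?cards0.
Qed.

Lemma nonmixed_eq : n_nonmixed_triple L = #|CC|.
Proof.
rewrite /n_nonmixed_triple.
have -> : [set S in pts L 3 | [exists i, S \subset class i]] = [set class i | i in CC].
  apply/setP => S; rewrite inE pts3_eq in_setU.
apply/idP/idP.
- case/andP => /orP[/imsetP[x _ ->]|//] /existsP[i Hsub].
  by move: Hsub; rewrite /tri (negbTE (tri_not_sub _ _ _ _)).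
- move=> HS; rewrite HS orbT /=; case/imsetP: HS => j _ ->.
  by apply/existsP; exists j.
exact: card_imset _ class_inj.
Qed.

Lemma conc_sub (S S' : {set lineIdx}) : S \subset S' -> concurrent L S' -> concurrent L S.
Proof. by move=> /subsetP H [p [Hp Hl]]; exists p; split => // l /H; apply: Hl. Qed.

Lemma conc_small (S : {set lineIdx}) : (#|S| <= 2)%N -> concurrent L S.
Proof.
move=> HS.
have conc2 (y z : lineIdx) (S' : {set lineIdx}) : y != z -> S' \subset [set y; z] -> concurrent L S'.
  move=> Hyz Hsub; apply: (conc_sub Hsub); exists (cross (L y) (L z)); split.
    exact: arr_cross.
  by move=> l; rewrite !inE => /orP[] /eqP ->; rewrite on_lineE ?dot_cross_l ?dot_cross_r.
case: (set_0Vmem S) => [->|[y Hy]].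
  by apply: (conc2 ((0 : 'I_3), (0 : 'I_3)) ((0 : 'I_3), (1 : 'I_3))); [|exact: sub0set].
case: (set_0Vmem (S :\ y)) => [E|[z Hz]].
  pose y' : lineIdx := if y == (0, 0) then (0, 1) else (0, 0).
  have Hyy : y != y' by rewrite /y'; case: (eqVneq y (0, 0)) => [->|Hne].
  apply: (conc2 y y' S Hyy); apply/subsetP => l Hl; rewrite !inE.
  case: (eqVneq l y) => //= Hne.
  have : l \in S :\ y by rewrite in_setD1 Hne Hl.
  by rewrite E inE.
move: Hz; rewrite in_setD1 => /andP[Hzy Hz].
apply: (conc2 y z); first by rewrite eq_sym.
have Hsub : [set y; z] \subset S by apply/subsetP => l; rewrite !inE => /orP[] /eqP ->.
have : #|[set y; z]| = 2%N by rewrite cards2 eq_sym Hzy.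
move=> H2; suff -> : S = [set y; z] by [].
by apply/eqP; rewrite eq_sym eqEcard Hsub H2.
Qed.

Lemma conc_tri a b : concurrent L (tri a b).
Proof.
exists (mp a b); split; first exact: mp_neq0.
by move=> l; rewrite -through_mp inE.
Qed.

Lemma conc_char (S : {set lineIdx}) : concurrent L S <->
  [\/ (#|S| <= 2)%N, exists a b, S \subset tri a b |
      exists i, concurrent L (class i) /\ S \subset class i].
Proof.
split.
- move=> [p [Hp Hl]].
  have Hsub : S \subset through L p by apply/subsetP => l Hs; rewrite inE; apply: Hl.
  case: (leqP #|S| 2) => H2; first by apply: Or31.
  case: (through_dich Hp) => [[a [b E]]|[i Hi]].
    by apply: Or32; exists a, b; rewrite -E.
  apply: Or33; exists i; split; last exact: subset_trans Hsub Hi.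
  have E : through L p = class i.
    apply/eqP; rewrite eqEcard Hi class_card.
    by apply: leq_trans (subset_leq_card Hsub).
  by exists p; split => // l; rewrite -E inE.
- case=> [H|[a [b H]]|[i [Hc H]]].
  + exact: conc_small.
  + exact: conc_sub H (conc_tri a b).
  + exact: conc_sub H Hc.
Qed.

End Struct.


Lemma sub_imset_inj (T1 T2 : finType) (f : T1 -> T2) (A B : {set T1}) :
  injective f -> f @: A \subset f @: B -> A \subset B.
Proof.
move=> fi H; apply/subsetP => x Hx.
have : f x \in f @: B by apply: (subsetP H); apply: imset_f.
by rewrite mem_imset.
Qed.

Section Iso.
Variable C : numClosedFieldType.

Definition al (N : lineIdx -> 'rV[C]_3) a := T N a 0 - T N 0 0.
Definition be (N : lineIdx -> 'rV[C]_3) b := T N 0 b.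

Lemma al_inj N : is_33_net N -> injective (al N).
Proof. by move=> HN a a' /addIr; apply: (T_inj_l HN). Qed.
Lemma be_inj N : is_33_net N -> injective (be N).
Proof. by move=> HN; apply: (T_inj_r HN). Qed.

Lemma T_decomp N : is_33_net N -> forall a b, T N a b = al N a + be N b.
Proof.
move=> HN a b; rewrite (latin_affine (T_inj_r HN) (T_inj_l HN) a b).
by rewrite /al /be addrAC.
Qed.

Variables L M : lineIdx -> 'rV[C]_3.
Hypothesis HL : is_33_net L.
Hypothesis HM : is_33_net M.
Hypothesis Hcc : forall i, concurrent L (class i) <-> concurrent M (class i).

Definition ps0 := invF (al_inj HM) \o al L.
Definition ps1 := invF (be_inj HM) \o be L.
Definition psi (i : 'I_3) : 'I_3 -> 'I_3 :=
  if i == 0 then ps0 else if i == 1 then ps1 else id.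

Lemma ps0_inj : injective ps0.
Proof. exact: inj_comp (can_inj (f_invF _)) (al_inj HL). Qed.
Lemma ps1_inj : injective ps1.
Proof. exact: inj_comp (can_inj (f_invF _)) (be_inj HL). Qed.

Lemma psi_inj i : injective (psi i).
Proof. by rewrite /psi; case: ifP => _; [exact: ps0_inj|case: ifP => _; [exact: ps1_inj|]]. Qed.

Definition fiso (l : lineIdx) : lineIdx := (l.1, psi l.1 l.2).

Lemma fiso_inj : injective fiso.
Proof. by move=> [i a] [j b] [/= eij]; subst j => /psi_inj ->. Qed.

Lemma T_ps a b : T M (ps0 a) (ps1 b) = T L a b.
Proof. by rewrite (T_decomp HM) /ps0 /ps1 /= !f_invF -(T_decomp HL). Qed.

Lemma fiso_tri a b : fiso @: tri L a b = tri M (ps0 a) (ps1 b).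
Proof. by rewrite /tri !imsetU !imset_set1 /fiso /psi /= T_ps. Qed.

Lemma fiso_class i : fiso @: class i = class i.
Proof.
apply/setP => -[j m]; rewrite inE /=; apply/imsetP/idP.
- by move=> [[k n]]; rewrite inE => Hk [-> _].
- move=> /eqP ->; exists (i, invF (@psi_inj i) m); first by rewrite inE.
  by rewrite /fiso /= f_invF.
Qed.

Lemma iso_main : lattice_iso L M.
Proof.
exists fiso; split; first exact: injF_bij fiso_inj.
move=> S; rewrite (conc_char HL S) (conc_char HM (fiso @: S)) (card_imset _ fiso_inj).
split.
- case=> [H|[a [b H]]|[i [Hc H]]].
  + by apply: Or31.
  + by apply: Or32; exists (ps0 a), (ps1 b); rewrite -fiso_tri; apply: imsetS.
  + by apply: Or33; exists i; split; [apply/Hcc|rewrite -fiso_class; apply: imsetS].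
- case=> [H|[a' [b' H]]|[i [Hc H]]].
  + by apply: Or31.
  + apply: Or32; exists (invF ps0_inj a'), (invF ps1_inj b').
    apply: (sub_imset_inj fiso_inj); rewrite fiso_tri !f_invF //.
  + apply: Or33; exists i; split; first by apply/Hcc.
    by apply: (sub_imset_inj fiso_inj); rewrite fiso_class.
Qed.

End Iso.

Section Relabel.
Variable C : numClosedFieldType.
Variable L : lineIdx -> 'rV[C]_3.
Hypothesis HL : is_33_net L.
Variable i : 'I_3.

Definition sw (j : 'I_3) : 'I_3 := if j == i then 1 else if j == 1 then i else j.

Lemma swK : involutive sw.
Proof.
move=> j; rewrite /sw.
case: (eqVneq j i) => [->|hji]; first by rewrite eqxx; case: (eqVneq (1 : 'I_3) i) => [->|_]; rewrite ?eqxx.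
case: (eqVneq j 1) => [->|hj1]; first by rewrite eqxx.
by rewrite (negbTE hji) (negbTE hj1).
Qed.

Definition gl (l : lineIdx) : lineIdx := (sw l.1, l.2).
Lemma glK : involutive gl.
Proof. by move=> [j a]; rewrite /gl /= swK. Qed.

Definition Lr (l : lineIdx) := L (gl l).

Lemma conc_relabel (S : {set lineIdx}) : concurrent Lr S <-> concurrent L (gl @: S).
Proof.
split => -[p [Hp H]]; exists p; split => //.
- by move=> l /imsetP[l0 Hl0 ->]; apply: H.
- by move=> l Hl; apply: H; apply: imset_f.
Qed.

Lemma gl_class j : gl @: class j = class (sw j).
Proof.
apply/setP => -[k m]; rewrite inE /=; apply/imsetP/idP.
- by move=> [[k' n]]; rewrite inE => /eqP /= Hk [-> _]; rewrite Hk.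
- move=> /eqP ->; exists (j, m); first by rewrite inE.
  by rewrite /gl /= .
Qed.

Lemma relabel_cc j : concurrent Lr (class j) <-> concurrent L (class (sw j)).
Proof. by rewrite conc_relabel gl_class. Qed.

Lemma relabel_net : is_33_net Lr.
Proof.
case: HL => [[H0 H1] H2]; split; first split.
- by move=> l; apply: H0.
- move=> l1 l2 Hne; apply: H1; apply: contra_neq Hne.
  by move/(congr1 gl); rewrite !glK.
- move=> p j k a b Hp Hjk Ha Hb k'.
  apply: (H2 p (sw j) (sw k) a b Hp _ Ha Hb (sw k')).
  by apply: contra_neq Hjk => /(congr1 sw); rewrite !swK.
Qed.

Lemma relabel_iso (M : lineIdx -> 'rV[C]_3) : lattice_iso Lr M -> lattice_iso L M.
Proof.
move=> [f [fb Hf]]; exists (f \o gl); split.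
  by apply: bij_comp => //; apply: inv_bij glK.
move=> S; rewrite imset_comp -Hf conc_relabel -imset_comp.
have -> : [set gl (gl x) | x in S] = S.
  by apply/setP => l; apply/imsetP/idP => [[l0 H0 ->]|Hl]; [rewrite glK|exists l; rewrite ?glK].
by [].
Qed.

End Relabel.


Definition Zw := (int * int)%type.
Definition zadd (x y : Zw) : Zw := (x.1 + y.1, x.2 + y.2).
Definition zopp (x : Zw) : Zw := (- x.1, - x.2).
Definition zmul (x y : Zw) : Zw := (x.1 * y.1 - x.2 * y.2, x.1 * y.2 + x.2 * y.1 - x.2 * y.2).
Definition zsub x y := zadd x (zopp y).
Definition zz : Zw := (0, 0).
Definition zo : Zw := (1, 0).
Definition zn (n : int) : Zw := (n, 0).
Fixpoint zpow (n : nat) : Zw := if n is n'.+1 then zmul (zpow n') (0, 1) else zo.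

Definition Z3 := (Zw * Zw * Zw)%type.
Definition crossZ (u v : Z3) : Z3 :=
  (zsub (zmul u.1.2 v.2) (zmul u.2 v.1.2),
   zsub (zmul u.2 v.1.1) (zmul u.1.1 v.2),
   zsub (zmul u.1.1 v.1.2) (zmul u.1.2 v.1.1)).
Definition dotZ (u v : Z3) : Zw :=
  zadd (zadd (zmul u.1.1 v.1.1) (zmul u.1.2 v.1.2)) (zmul u.2 v.2).
Definition zdet u v x := dotZ (crossZ u v) x.

Definition ord3s : seq 'I_3 := [:: 0; 1; 2].

Lemma all_ord3 (P : pred 'I_3) : all P ord3s -> forall i, P i.
Proof. by move=> /and4P[h0 h1 h2 _] i; case: (ord3 i) => ->. Qed.

Lemma sum3n (V : nmodType) (F : 'I_3 -> V) : \sum_i F i = F 0 + F 1 + F 2.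
Proof.
rewrite !big_ord_recr big_ord0 /= add0r.
by congr (_ + _ + _); congr F; apply/val_inj.
Qed.

Lemma card_ord3 (Q : pred 'I_3) : #|[set m | Q m]| = count Q ord3s.
Proof.
rewrite -sum1_card big_mkcond sum3n /= !inE.
by case: (Q 0); case: (Q 1); case: (Q 2).
Qed.

Definition netcheck (Nz : lineIdx -> Z3) : bool :=
  all (fun l1 => all (fun l2 => (Nz (l1, l2) != (zz, zz, zz))) ord3s) ord3s &&
  all (fun i1 => all (fun a1 => all (fun i2 => all (fun a2 =>
     ((i1, a1) == (i2, a2)) || (crossZ (Nz (i1, a1)) (Nz (i2, a2)) != (zz, zz, zz)))
     ord3s) ord3s) ord3s) ord3s &&
  all (fun i => all (fun j => (i == j) || all (fun a => all (fun b => all (fun k =>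
     count (fun m => zdet (Nz (i, a)) (Nz (j, b)) (Nz (k, m)) == zz) ord3s == 1%N)
     ord3s) ord3s) ord3s) ord3s) ord3s.

Section Eval.
Variable C : numClosedFieldType.
Variable w : C.
Hypothesis Hw : w ^+ 2 + w + 1 = 0.

Definition ev (x : Zw) : C := x.1%:~R + x.2%:~R * w.

Lemma w2 : w ^+ 2 = - w - 1.
Proof. by apply/eqP; rewrite -subr_eq0 -[X in _ == X]Hw; apply/eqP; ring. Qed.

Lemma ev_add x y : ev (zadd x y) = ev x + ev y.
Proof. by rewrite /ev /zadd /= !rmorphD /=; ring. Qed.
Lemma ev_opp x : ev (zopp x) = - ev x.
Proof. by rewrite /ev /zopp /= !rmorphN /=; ring. Qed.
Lemma ev_sub x y : ev (zsub x y) = ev x - ev y.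
Proof. by rewrite /zsub ev_add ev_opp. Qed.
Lemma ev_mul x y : ev (zmul x y) = ev x * ev y.
Proof.
rewrite /ev /zmul /= !(rmorphB, rmorphD, rmorphM) /=.
apply/eqP; rewrite -subr_eq0; apply/eqP.
transitivity (- (x.2%:~R * y.2%:~R) * (w ^+ 2 + w + 1) : C); first ring.
by rewrite Hw mulr0.
Qed.
Lemma ev_pow n : ev (zpow n) = w ^+ n.
Proof.
elim: n => [|n IH]; first by rewrite /ev /= mulr0z mul0r addr0.
by rewrite /= ev_mul IH exprSr /ev /= mulr0z mulr1z mul1r add0r.
Qed.
Lemma ev_zz : ev zz = 0. Proof. by rewrite /ev /= mulr0z mul0r addr0. Qed.
Lemma ev_zo : ev zo = 1. Proof. by rewrite /ev /= mulr0z mul0r addr0. Qed.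
Lemma ev_zn n : ev (zn n) = n%:~R. Proof. by rewrite /ev /= mulr0z mul0r addr0. Qed.

Lemma ev_eq0 x : (ev x == 0) = (x == zz).
Proof.
apply/idP/idP => [/eqP H|/eqP ->]; last by rewrite ev_zz.
case: x H => a b; rewrite /ev /= => H.
have E : ((a ^+ 2 - a * b + b ^+ 2 : int)%:~R : C) = 0.
  have -> : ((a ^+ 2 - a * b + b ^+ 2 : int)%:~R : C) =
     (a%:~R + b%:~R * w) * (a%:~R - b%:~R - b%:~R * w) + b%:~R ^+ 2 * (w ^+ 2 + w + 1).
    by rewrite rmorphD rmorphB rmorphM !rmorphXn /=; ring.
  by rewrite H Hw !mulr0 mul0r addr0.
move/eqP: E; rewrite intr_eq0 => /eqP E.
by have [-> ->] : a = 0 /\ b = 0 by split; nia.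
Qed.

Definition ev3 (u : Z3) : 'rV[C]_3 := vec3 (ev u.1.1) (ev u.1.2) (ev u.2).

Lemma cross_ev u v : cross (ev3 u) (ev3 v) = ev3 (crossZ u v).
Proof. by rewrite /cross /ev3 !vec3E' /crossZ /= !ev_sub !ev_mul. Qed.
Lemma dot_ev u v : dot (ev3 u) (ev3 v) = ev (dotZ u v).
Proof. by rewrite /dot /ev3 !vec3E' /dotZ !ev_add !ev_mul. Qed.

Lemma ev3_eq0 u : (ev3 u == 0) = (u == (zz, zz, zz)).
Proof.
apply/idP/idP => [/eqP H|/eqP ->]; last by rewrite /ev3 /= ev_zz vec3_zero.
case: u H => -[x y] z; rewrite /ev3 /= -vec3_zero => /vec3_inj[/eqP h1 /eqP h2 /eqP h3].
by move: h1 h2 h3; rewrite !ev_eq0 => /eqP -> /eqP -> /eqP ->.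
Qed.

Section Check.
Variable Nz : lineIdx -> Z3.
Hypothesis Hc : netcheck Nz.
Let N l := ev3 (Nz l).

Lemma nc_neq0 l : N l != 0.
Proof.
case/andP: Hc => /andP[h1 _] _; case: l => i a.
by rewrite /N ev3_eq0; move/all_ord3: h1 => /(_ i) /all_ord3 /(_ a).
Qed.

Lemma nc_cross l1 l2 : l1 != l2 -> cross (N l1) (N l2) != 0.
Proof.
case/andP: Hc => /andP[_ h2] _; case: l1 => i1 a1; case: l2 => i2 a2 => Hne.
rewrite /N cross_ev ev3_eq0.
move/all_ord3: h2 => /(_ i1) /all_ord3 /(_ a1) /all_ord3 /(_ i2) /all_ord3 /(_ a2).
by rewrite (negbTE Hne).
Qed.

Lemma nc_net : is_33_net N.
Proof.
split; first split.
- exact: nc_neq0.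
- move=> l1 l2 Hne [c Ec]; move: (nc_cross Hne); rewrite Ec cross_self_scale.
  by rewrite eqxx.
- move=> p i j a b Hp Hij Ha Hb k.
  have Hn : (i, a) != (j, b) by rewrite xpair_eqE (negbTE Hij).
  have := nc_cross Hn; set X := cross _ _ => HX.
  have [c Ec] : exists c, p = c *: X.
    apply: cross_perp => //; apply/eqP; rewrite dotC -on_lineE //.
  have cn : c != 0 by apply: contraNneq Hp => c0; rewrite Ec c0 scale0r.
  have -> : [set m | on_line p (N (k, m))] =
            [set m | zdet (Nz (i, a)) (Nz (j, b)) (Nz (k, m)) == zz].
    apply/setP => m; rewrite !inE Ec on_lineZ // on_lineE /X /N cross_ev dot_ev.
    by rewrite ev_eq0.
  rewrite card_ord3; apply/eqP.
  case/andP: Hc => _ h3.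
  move/all_ord3: h3 => /(_ i) /all_ord3 /(_ j); rewrite (negbTE Hij) orFb.
  by move/all_ord3 => /(_ a) /all_ord3 /(_ b) /all_ord3 /(_ k).
Qed.

Lemma nc_cc i : concurrent N (class i) <-> (zdet (Nz (i, 0)) (Nz (i, 1)) (Nz (i, 2)) == zz).
Proof.
have H01 : ((i, 0) : lineIdx) != (i, 1) by rewrite xpair_eqE eqxx.
split.
- move=> [p [Hp Hl]].
  have h0 : dot (N (i, 0)) p = 0 by apply/eqP; rewrite dotC -on_lineE; apply: Hl; rewrite inE.
  have h1 : dot (N (i, 1)) p = 0 by apply/eqP; rewrite dotC -on_lineE; apply: Hl; rewrite inE.
  have [c Ec] := cross_perp h0 h1 (nc_cross H01).
  have cn : c != 0 by apply: contraNneq Hp => c0; rewrite Ec c0 scale0r.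
  have H2 : (i, 2) \in class i by rewrite inE.
  have := Hl (i, 2) H2.
  by rewrite Ec on_lineZ // on_lineE /N cross_ev dot_ev ev_eq0.
- move=> Hd; exists (cross (N (i, 0)) (N (i, 1))); split; first exact: nc_cross.
  move=> [k m]; rewrite inE /= => /eqP ->; rewrite on_lineE.
  case: (ord3 m) => ->; rewrite ?dot_cross_l ?dot_cross_r //.
  by move: Hd; rewrite /zdet /N cross_ev dot_ev => /eqP ->; rewrite ev_zz.
Qed.

End Check.

End Eval.

Section Scale.
Variable C : numClosedFieldType.
Variables N N' : lineIdx -> 'rV[C]_3.
Hypothesis Hs : forall l, exists c, c != 0 /\ N l = c *: N' l.

Lemma on_scale p l : on_line p (N l) = on_line p (N' l).
Proof. by have [c [cn ->]] := Hs l; rewrite on_lineZr. Qed.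

Lemma conc_scale S : concurrent N S <-> concurrent N' S.
Proof. by split => -[p [Hp H]]; exists p; split => // l /H; rewrite on_scale. Qed.

Lemma net_scale : is_33_net N' -> is_33_net N.
Proof.
move=> [[H0 H1] H2]; split; first split.
- move=> l; have [c [cn ->]] := Hs l; by rewrite scaler_eq0 negb_or cn H0.
- move=> l1 l2 Hne [c Ec]; apply: (H1 l1 l2 Hne).
  have [c1 [c1n E1]] := Hs l1; have [c2 [c2n E2]] := Hs l2.
  exists (c1^-1 * c * c2); rewrite -!scalerA -E2 -Ec E1 scalerA mulVf ?scale1r //.
- move=> p i j a b Hp Hij; rewrite !on_scale => Ha Hb k.
  have -> : [set m | on_line p (N (k, m))] = [set m | on_line p (N' (k, m))].
    by apply/setP => m; rewrite !inE on_scale.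
  exact: H2 Hp Hij Ha Hb k.
Qed.

End Scale.


Lemma exists_w (C : numClosedFieldType) : exists w : C, w ^+ 2 + w + 1 = 0.
Proof.
exists ((-1 + 'i * sqrtC 3) / 2).
have hs : sqrtC 3 ^+ 2 = 3 :> C by rewrite sqrtCK.
have hi : 'i ^+ 2 = -1 :> C by rewrite sqrCi.
have h2 : (2 : C) != 0 by rewrite pnatr_eq0.
transitivity ((3 + 'i ^+ 2 * sqrtC 3 ^+ 2) / 4 : C).
  by field.
by rewrite hi hs mulN1r subrr mul0r.
Qed.

Definition cevaZ (l : lineIdx) : Z3 :=
  match (l.1 : nat) with
  | 0%N => (zo, zopp (zpow l.2), zz)
  | 1%N => (zz, zo, zopp (zpow l.2))
  | _ => (zopp (zpow l.2), zz, zo)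
  end.

Definition hesseZ (l : lineIdx) : Z3 := (zo, zpow (l.2 + l.1)%N, zpow (2 * l.2)%N).

Definition c3list : seq Z3 :=
  [:: (zz, zo, zz); (zo, zn 2, zn 2); (zn 2, zz, zo);
      (zo, zz, zz); (zo, zn 2, zo); (zz, zn 2, zo);
      (zo, zopp (zn 2), zz); (zo, zo, zo); (zz, zz, zo)].
Definition c3Z (l : lineIdx) : Z3 := nth (zz, zz, zz) c3list (3 * l.1 + l.2).

Lemma ceva_check : netcheck cevaZ. Proof. by vm_compute. Qed.
Lemma hesse_check : netcheck hesseZ. Proof. by vm_compute. Qed.
Lemma c3_check : netcheck c3Z. Proof. by vm_compute. Qed.

Arguments zn : simpl never.
Arguments zo : simpl never.
Arguments zz : simpl never.
Arguments zopp : simpl never.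

Section Models.
Variable C : numClosedFieldType.
Variable w : C.
Hypothesis Hw : w ^+ 2 + w + 1 = 0.

Lemma ceva_ev l : ceva w l = ev3 w (cevaZ l).
Proof.
rewrite /ceva /cevaZ; case: (l.1 : nat) => [|[|n]];
  by rewrite /ev3 /= ?(ev_opp, ev_pow Hw, ev_zo, ev_zz).
Qed.

Lemma hesse_ev l : hesse w ord_max l = ev3 w (hesseZ l).
Proof.
rewrite /hesse /hesse_line /hesseZ.
have E : ((lift ord_max l.1 : 'I_4) : nat) = l.1 by rewrite lift_max.
rewrite E; move: E; case: l => [[i Hi] a] /= _; rewrite ltn_eqF //.
by rewrite /ev3 /= ?(ev_pow Hw, ev_zo).
Qed.

Lemma two_neq0 : (2 : C) != 0. Proof. by rewrite pnatr_eq0. Qed.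

Lemma c3_scale l : exists c : C, c != 0 /\ case3_arr 2 l = c *: ev3 w (c3Z l).
Proof.
case: l => i j.
have E2 : ev w (zn 2) = 2 by rewrite ev_zn.
have E1 : (2 : C) - 1 = 1 by ring.
exists (if (i, j) == (0, 1) then 2^-1 else 1); split.
  by case: ifP => _; rewrite ?invr_eq0 ?two_neq0 ?oner_neq0.
case: (ord3 i) => ->; case: (ord3 j) => ->;
  rewrite /case3_arr /c3Z /=.
all: apply: vec3_ext; rewrite !scaleE /ev3 !vec3E' ?ev_opp ?E2 ?ev_zo ?ev_zz.
all: rewrite ?mul1r ?E1 ?divr1 ?mulr1 ?mulr0 //.
all: try by rewrite mulVf ?two_neq0.
ring.
Qed.

Lemma ceva_props : is_33_net (ceva w) /\ forall i, concurrent (ceva w) (class i).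
Proof.
have Hs : forall l, exists c : C, c != 0 /\ ceva w l = c *: ev3 w (cevaZ l).
  by move=> l; exists 1; rewrite oner_neq0 scale1r ceva_ev.
split; first exact: (net_scale Hs (nc_net Hw ceva_check)).
move=> i; apply/(conc_scale Hs)/(nc_cc Hw ceva_check).
have : all (fun i => zdet (cevaZ (i, 0)) (cevaZ (i, 1)) (cevaZ (i, 2)) == zz) ord3s.
  by vm_compute.
by move/all_ord3/(_ i).
Qed.

Lemma hesse_props : is_33_net (hesse w ord_max) /\
  forall i, ~ concurrent (hesse w ord_max) (class i).
Proof.
have Hs : forall l, exists c : C, c != 0 /\ hesse w ord_max l = c *: ev3 w (hesseZ l).
  by move=> l; exists 1; rewrite oner_neq0 scale1r hesse_ev.
split; first exact: (net_scale Hs (nc_net Hw hesse_check)).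
move=> i /(conc_scale Hs)/(nc_cc Hw hesse_check).
have : all (fun i => zdet (hesseZ (i, 0)) (hesseZ (i, 1)) (hesseZ (i, 2)) != zz) ord3s.
  by vm_compute.
by move/all_ord3/(_ i)/negbTE => ->.
Qed.

Lemma c3_props : is_33_net (case3_arr (2 : C)) /\
  forall i, concurrent (case3_arr (2 : C)) (class i) <-> i = 1.
Proof.
have Hs := c3_scale.
split; first exact: (net_scale Hs (nc_net Hw c3_check)).
move=> i; rewrite (conc_scale Hs (class i)) (nc_cc Hw c3_check).
have : all (fun i => (zdet (c3Z (i, 0)) (c3Z (i, 1)) (c3Z (i, 2)) == zz) == (i == 1)) ord3s.
  by vm_compute.
by move/all_ord3/(_ i)/eqP => ->; split => /eqP.
Qed.

End Models.


Section Final.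
Variable C : numClosedFieldType.
Variable L : lineIdx -> 'rV[C]_3.
Hypothesis HL : is_33_net L.

Lemma inCC i : (i \in CC L) <-> concurrent L (class i).
Proof. by rewrite inE /ccb; split => /pbP. Qed.

Lemma CC_not2 : #|CC L| != 2%N.
Proof.
apply/negP => /eqP H2.
have H1 : #|~: CC L| == 1%N.
  by have := cardsC (CC L); rewrite H2 card_ord => E; apply/eqP; lia.
move/cards2P: (introT eqP H2) => [i [j [Hij Eij]]].
move/cards1P: H1 => [k Ek].
have : k \in ~: CC L by rewrite Ek inE.
rewrite inE => Hk.
have Hi : i \in CC L by rewrite Eij !inE eqxx.
have Hj : j \in CC L by rewrite Eij !inE eqxx orbT.
have Hik : i != k by apply: contraNneq Hk => <-.
have Hjk : j != k by apply: contraNneq Hk => <-.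
move/negP: Hk; apply; apply/inCC.
by apply: (conc_third HL Hij Hik Hjk); apply/inCC.
Qed.

Lemma case_k3 : #|CC L| = 3%N -> case1 L.
Proof.
move=> H3.
have HT : CC L = setT by apply/eqP; rewrite eqEcard subsetT cardsT card_ord H3.
have Hall i : concurrent L (class i) by apply/inCC; rewrite HT inE.
split; first by rewrite (card_pts2 HL) H3.
split; first by rewrite (card_pts3 HL) H3.
split.
  by move=> i; rewrite (inner_eq HL); have := Hall i => /inCC; rewrite inE => ->.
have [w Hw] := exists_w C; exists w; split => //.
have [HM HcM] := ceva_props Hw.
by apply: (iso_main HL HM) => i; split => _; [apply: HcM|apply: Hall].
Qed.

Lemma case_k0 : #|CC L| = 0%N -> case2 L.
Proof.
move=> H0.
have H0' : CC L = set0 by apply: cards0_eq.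
have Hno i : ~ concurrent L (class i) by move/inCC; rewrite H0' inE.
split; first by rewrite (card_pts2 HL) H0.
split; first by rewrite (card_pts3 HL) H0.
split; first by rewrite (nonmixed_eq HL) H0.
have [w Hw] := exists_w C; exists w, ord_max; split => //.
have [HM HcM] := hesse_props Hw.
by apply: (iso_main HL HM) => i; split => /=; [move/Hno|move/HcM].
Qed.

Lemma sw_eq (i0 j : 'I_3) : (sw i0 j == i0) = (j == 1).
Proof.
apply/eqP/eqP => [E|->].
  by rewrite -(swK i0 j) E /sw eqxx.
by rewrite /sw; case: (eqVneq (1 : 'I_3) i0) => [->|_]; rewrite ?eqxx.
Qed.

Lemma two3 : (2 : C) ^+ 3 != -1.
Proof.
rewrite -subr_eq0 opprK.
have -> : (2 : C) ^+ 3 + 1 = 9%:R by ring.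
by rewrite pnatr_eq0.
Qed.

Lemma case_k1 : #|CC L| = 1%N -> case3 L.
Proof.
move=> H1.
move/eqP/cards1P: (H1) => [i0 E0].
have Hcc i : concurrent L (class i) <-> i = i0.
  by rewrite -inCC E0 inE; split => /eqP.
split; first by rewrite (card_pts2 HL) H1.
split; first by rewrite (card_pts3 HL) H1.
split.
  exists i0; split.
    rewrite (inner_eq HL); have : i0 \in CC L by rewrite E0 inE.
    by rewrite inE => ->.
  move=> i' Hi'; rewrite (inner_eq HL).
  have : i' \notin CC L by rewrite E0 inE.
  by rewrite inE => /negbTE ->.
exists 2; split; first by rewrite pnatr_eq0.
split; first by rewrite -subr_eq0 (_ : (2 : C) - 1 = 1) ?oner_neq0 //; ring.
split; first exact: two3.
have [w Hw] := exists_w C.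
have [HM HcM] := c3_props Hw.
apply: (relabel_iso (i := i0)).
apply: (iso_main (relabel_net HL i0) HM) => j.
rewrite relabel_cc Hcc HcM; split => /eqP; rewrite ?sw_eq => /eqP //.
by move=> ->; apply/eqP; rewrite sw_eq.
Qed.

Lemma k_cases : [\/ #|CC L| = 0%N, #|CC L| = 1%N | #|CC L| = 3%N].
Proof.
have Hle : (#|CC L| <= 3)%N by rewrite -[X in (_ <= X)%N](card_ord 3); apply: max_card.
have H2 := CC_not2.
move: Hle H2; case: #|CC L| => [|[|[|[|n]]]] //= _ _; by [apply: Or31|apply: Or32|apply: Or33].
Qed.

End Final.

Theorem theorem2p2 (C : numClosedFieldType) :
  (forall L : lineIdx -> 'rV[C]_3, is_33_net L ->
     (forall p : 'rV[C]_3, p != 0 -> (2 <= #|through L p|)%N ->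
        #|through L p| = 2%N \/ #|through L p| = 3%N) /\
     (forall p : 'rV[C]_3, p != 0 ->
        (forall i : 'I_3, exists j : 'I_3, on_line p (L (i, j))) ->
        #|through L p| = 3%N) /\
     (n_nonmixed_triple L = 0%N \/ n_nonmixed_triple L = 1%N \/
      n_nonmixed_triple L = 3%N) /\
     #|pts L 3| <> 11%N /\
     (case1 L \/ case2 L \/ case3 L)) /\
  (exists L : lineIdx -> 'rV[C]_3, is_33_net L /\ case1 L) /\
  (exists L : lineIdx -> 'rV[C]_3, is_33_net L /\ case2 L) /\
  (exists L : lineIdx -> 'rV[C]_3, is_33_net L /\ case3 L).
Proof.
split.
  move=> L HL.
  split; first by move=> p Hp H2; apply: (through_23 HL).
  split; first by move=> p Hp H; apply: (through_all HL).
  rewrite (nonmixed_eq HL) (card_pts3 HL).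
  case: (k_cases HL) => Hk; rewrite Hk.
  - by split; [left|split => //; right; left; apply: case_k0].
  - by split; [right; left|split => //; right; right; apply: case_k1].
  - by split; [right; right|split => //; left; apply: case_k3].
have [w Hw] := exists_w C.
split.
  have [HM HcM] := ceva_props Hw.
  exists (ceva w); split => //; apply: (case_k3 HM).
  have -> : CC (ceva w) = setT by apply/setP => i; rewrite in_setT; apply/(inCC (ceva w) i); apply: HcM.
  by rewrite cardsT card_ord.
split.
  have [HM HcM] := hesse_props Hw.
  exists (hesse w ord_max); split => //; apply: (case_k0 HM).
  apply/eqP; rewrite cards_eq0; apply/eqP/setP => i; rewrite in_set0.
  by apply/negP => /(inCC (hesse w ord_max) i) /HcM.
have [HM HcM] := c3_props Hw.
exists (case3_arr 2); split => //; apply: (case_k1 HM).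
have -> : CC (case3_arr (2 : C)) = [set 1].
  by apply/setP => i; rewrite in_set1; apply/idP/eqP => [/(inCC _ i)/HcM|/HcM/(inCC _ i)].
by rewrite cards1.
Qed.
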